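(* Let $(X,T)$ be a dynamical system with $\mathcal M_T(X)\neq\emptyset$. If $\mathcal M_T^e(X)$ is dense in $\mathcal M_T(X)$, then $T|_{C_M(T)}\colon C_M(T)\to C_M(T)$ is topologically transitive.
   Context: A dynamical system $(X,T)$ consists of a complete separable metric space $(X,\rho)$ and a continuous surjection $T\colon X\to X$. $\mathcal M_T(X)$ is the set of $T$-invariant Borel probability measures (weak$*$ topology), $\mathcal M_T^e(X)$ the ergodic ones. The measure center $C_M(T)$ is the complement of the union of all open sets $U$ with $\mu(U)=0$ for every $\mu\in\mathcal M_T(X)$; it is closed and $T$-invariant. A map $S\colon Y\to Y$ is topologically transitive if for every two nonempty open $U,V\subset Y$ there is $n>0$ with $U\cap S^{-n}V\ne\emptyset$. *)

(* Defs.v *)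
From HB Require Import structures.
From mathcomp Require Import all_boot all_order all_algebra.
From mathcomp Require Import all_classical all_reals all_analysis.
Set Implicit Arguments. Unset Strict Implicit. Unset Printing Implicit Defensive.
Import Order.TTheory GRing.Theory Num.Theory.
Import numFieldNormedType.Exports.
Local Open Scope classical_set_scope.
Local Open Scope ring_scope.

Definition borel (R : realType) (X : pseudoPMetricType R) :
  measurableType (sigma_display (@open X)) :=
  g_sigma_algebraType (@open X).

Definition prob (R : realType) (X : pseudoPMetricType R) :=
  probability (borel X) R.

Definition T_invariant (R : realType) (X : pseudoPMetricType R) (T : X -> X)
  (mu : prob X) : Prop :=
  forall A : set (borel X), measurable A -> mu (T @^-1` A) = mu A.

Definition T_ergodic (R : realType) (X : pseudoPMetricType R) (T : X -> X)
  (mu : prob X) : Prop :=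
  T_invariant T mu /\
  forall A : set (borel X), measurable A -> T @^-1` A = A ->
    mu A = 0%E \/ mu A = 1%E.

Definition bcont (R : realType) (X : pseudoPMetricType R) (f : X -> R) : Prop :=
  continuous f /\ exists M : R, forall x, `|f x| <= M.

Definition pint (R : realType) (X : pseudoPMetricType R) (mu : prob X)
  (f : X -> R) : R :=
  fine (\int[mu]_(x in setT) (f x)%:E)%E.

(* E is weak*-dense in M (as subsets of the Borel probability measures on X):
   every basic weak* neighbourhood
     { nu | |int f_i dnu - int f_i dmu| < eps, i < n }
   (f_i bounded continuous, eps > 0) of every mu in M meets E. *)
Definition weak_star_dense_in (R : realType) (X : pseudoPMetricType R)
  (E M : set (prob X)) : Prop :=
  forall mu, M mu ->
  forall (n : nat) (f : 'I_n -> X -> R), (forall i, bcont (f i)) ->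
  forall eps : R, 0 < eps ->
  exists nu, E nu /\ forall i, `|pint nu (f i) - pint mu (f i)| < eps.

Definition measure_center (R : realType) (X : pseudoPMetricType R)
  (T : X -> X) : set X :=
  ~` \bigcup_(U in [set U : set X | open U /\
         forall mu : prob X, T_invariant T mu -> mu U = 0%E]) U.

(* Topological transitivity of the restriction T|_C : C -> C, with C carrying
   the subspace topology (relatively open sets are C `&` U with U open in X):
   for all nonempty relatively open C`&`U, C`&`V there is n > 0 with
   (C`&`U) `&` (T|_C)^{-n}(C`&`V) nonempty. *)
Definition transitive_on (R : realType) (X : pseudoPMetricType R)
  (C : set X) (T : X -> X) : Prop :=
  forall U V : set X, open U -> open V ->
    (C `&` U) !=set0 -> (C `&` V) !=set0 ->
    exists n : nat, (0 < n)%N /\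
      exists x, (C `&` U) x /\ (C `&` V) (iter n T x).

Definition separable_space (R : realType) (X : pseudoPMetricType R) : Prop :=
  exists D : set X, countable D /\ dense D.

(* Main.v *)
Require Import Defs.
From HB Require Import structures.
From mathcomp Require Import all_boot all_order all_algebra.
From mathcomp Require Import all_classical all_reals all_analysis.
From mathcomp Require Import measurable_realfun.
Import Order.TTheory GRing.Theory Num.Theory.
Local Open Scope classical_set_scope.
Local Open Scope ring_scope.
Set Implicit Arguments. Unset Strict Implicit. Unset Printing Implicit Defensive.
Import numFieldNormedType.Exports.
Section Basics.
Context (R : realType) (X : pseudoPMetricType R).

Lemma open_mble (U : set X) : open U -> measurable (U : set (borel X)).
Proof. by move=> oU; apply: sub_sigma_algebra. Qed.

Lemma cont_mfun (f : X -> R) : continuous f ->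
  measurable_fun [set: borel X] (f : borel X -> R).
Proof.
move=> /continuousP cf; apply: (measurability _ (RGenOpens.measurableE R)).
move=> _ [_ [a [b ->] <-]]; rewrite setTI; apply: open_mble.
by apply: cf; exact: interval_open.
Qed.

End Basics.
Section Lind.
Context (R : realType) (X : pseudoPMetricType R).

Lemma null_union (sepX : separable_space X)
  (mu : {measure set (borel X) -> \bar R}) (F : set (set X)) :
  (forall W, F W -> open W /\ mu W = 0%E) -> mu (\bigcup_(W in F) W) = 0%E.
Proof.
move=> hF.
have oU : open (\bigcup_(W in F) W) by apply: bigcup_open => W /hF[].
case: sepX => D [cD dD].
have /countable_injP[f finj] := cD.
pose e n : X := get [set d | D d /\ f d = n].
have eD d : D d -> e (f d) = d.
  move=> Dd; have : D (e (f d)) /\ f (e (f d)) = f d.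
    by apply: (@getPex _ [set d0 | D d0 /\ f d0 = f d]); exists d.
  case=> De fe; have := finj (e (f d)) d; rewrite !in_setE; apply => //.
pose good (i k : nat) := exists W, F W /\ ball (e i) k.+1%:R^-1 `<=` W.
pose S (p : nat * nat) : set X :=
  if pselect (good p.1 p.2) is left h then projT1 (cid h) else set0.
have SF p : F (S p) \/ S p = set0.
  rewrite /S; case: pselect => [h|_]; last by right.
  by left; case: (projT2 (cid h)).
pose A n := if unpickle n is Some p then S p else set0.
have AF n : F (A n) \/ A n = set0.
  by rewrite /A; case: (unpickle n) => [p|]; [exact: SF|right].
have mA n : measurable (A n : set (borel X)).
  by case: (AF n) => [/hF[oA _]|->]; [exact: open_mble|exact: measurable0].
have A0 n : mu (A n) = 0%E.
  by case: (AF n) => [/hF[_ ->]|->] //; rewrite measure0.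
have cover : \bigcup_(W in F) W `<=` \bigcup_n A n.
  move=> x [W FW Wx]; have [oW _] := hF W FW.
  have nW : nbhs x W by apply: open_nbhs_nbhs; split.
  have [dd hd] := nbhs_ex nW.
  have d2 : 0 < dd%:num / 2 by [].
  have [k hk] := ltr_add_invr d2; rewrite add0r in hk.
  have [z [bz Dz]] : (interior (ball x k.+1%:R^-1)) `&` D !=set0.
    apply: dD; last exact: open_interior.
    by exists x; apply: nbhsx_ballx.
  have bxz := interior_subset bz.
  have gd : good (f z) k.
    exists W; split => // y; rewrite eD // => bzy; apply: hd.
    have := ball_triangle bxz bzy; apply: le_ball.
    by rewrite [leRHS](splitr dd%:num) lerD // ltW.
  exists (pickle (f z, k)) => //; rewrite /A pickleK /S /=.
  case: pselect => [h|//]; case: (projT2 (cid h)) => _; apply.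
  by rewrite eD //; exact: ball_sym.
apply/eqP; rewrite eq_le measure_ge0 andbT.
rewrite (le_trans (measure_sigma_subadditive _ mA _ cover)) //.
  exact: open_mble.
by rewrite eseries0.
Qed.

End Lind.
Section Ints.
Context (R : realType) (X : pseudoPMetricType R).
Variable mu : prob X.
Variable g : X -> R.
Hypothesis gc : continuous g.
Hypothesis g01 : forall x, 0 <= g x <= 1.

Let mg : measurable_fun [set: borel X] (fun x => (g x)%:E).
Proof. by apply/measurable_EFinP; exact: cont_mfun. Qed.

Lemma int_ge0 : (0 <= \int[mu]_(x in setT) (g x)%:E)%E.
Proof. by apply: integral_ge0 => x _; rewrite lee_fin; case/andP: (g01 x). Qed.

Lemma int_le1 : (\int[mu]_(x in setT) (g x)%:E <= 1)%E.
Proof.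
have := @ge0_le_integral _ _ _ mu setT measurableT (fun x => (g x)%:E)
  (fun x => cst 1%E x) _ mg (measurable_cst _).
have P1 : mu [set: borel X] = 1%E := probability_setT mu.
rewrite integral_cst // => h; apply: le_trans (h _ _) _.
- by move=> x _; rewrite lee_fin; case/andP: (g01 x).
- by move=> x _; rewrite lee_fin; case/andP: (g01 x).
- by rewrite mul1e le_eqVlt; apply/orP; left; apply/eqP; exact: P1.
Qed.

Lemma pint_gt0 (W : set X) : open W -> (forall x, W x -> 2^-1 <= g x) ->
  (0 < mu W)%E -> 0 < pint mu g.
Proof.
move=> oW gW muW; rewrite /pint; apply: fine_gt0; apply/andP; split; last first.
  by rewrite (le_lt_trans int_le1) // ltey.
have mW := open_mble oW.
have := @ge0_le_integral _ _ _ mu setT measurableT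
  (fun x => (2^-1 * \1_W x)%:E) (fun x => (g x)%:E) _ _ mg.
rewrite (@integralZl_indic _ _ _ mu setT measurableT (fun=> W)) //; last first.
  by move=> /ltW; rewrite leNgt invr_gt0 ltr0n.
rewrite integral_indic // setIT => h.
apply: lt_le_trans (h _ _ _).
- by rewrite mule_gt0 // lte_fin invr_gt0 ltr0n.
- by move=> x _; rewrite lee_fin indicE mulr_ge0 // ?invr_ge0 ?ler0n.
- apply/measurable_EFinP; apply: measurable_funM; first exact: measurable_cst.
  exact: measurable_indic.
- move=> x _; rewrite lee_fin indicE; case: (boolP (x \in W)) => [|_].
    by rewrite in_setE => /gW; rewrite mulr1.
  by rewrite mulr0; case/andP: (g01 x).
Qed.

Lemma pint_pos (U : set X) : open U -> (forall x, ~ U x -> g x = 0) ->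
  0 < pint mu g -> (0 < mu U)%E.
Proof.
move=> oU gU; rewrite /pint; apply: contraTT; rewrite -!leNgt => muU.
have mU := open_mble oU.
have := @ge0_le_integral _ _ _ mu setT measurableT (fun x => (g x)%:E)
  (fun x => (\1_U x)%:E) _ mg.
rewrite integral_indic // setIT => h.
have h0 : (\int[mu]_(x in setT) (g x)%:E = 0)%E.
  apply/eqP; rewrite eq_le int_ge0 andbT; apply: le_trans muU; apply: h.
  - by move=> x _; rewrite lee_fin; case/andP: (g01 x).
  - by apply/measurable_EFinP; exact: measurable_indic.
  - move=> x _; rewrite lee_fin indicE; case: (boolP (x \in U)).
      by case/andP: (g01 x).
    by rewrite notin_setE => /gU ->.
by rewrite h0.
Qed.
End Ints.
Section Exg.
Context (R : realType) (X : pseudoPMetricType R).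

Definition goodf (U : set X) (g : X -> R) :=
  continuous g /\ (forall x, 0 <= g x <= 1) /\ (forall x, ~ U x -> g x = 0).

Lemma exists_g (sepX : separable_space X) (mu : prob X) (U : set X) :
  open U -> (0 < mu U)%E -> exists g, goodf U g /\ 0 < pint mu g.
Proof.
move=> oU muU; case: (pselect (exists g, goodf U g /\ 0 < pint mu g)) => // nex.
exfalso.
pose F := [set W : set X | open W /\ mu W = 0%E /\
  exists g, goodf U g /\ forall x, W x -> 2^-1 <= g x].
have hF W : F W -> open W /\ mu W = 0%E by case=> ? [].
have := null_union sepX hF => F0.
have sub : U `<=` \bigcup_(W in F) W.
  move=> x Ux.
  pose u := @Urysohn X R [set x] (~` U).
  have sep : uniform_separator [set x] (~` U).
    by apply: (@point_uniform_separator R); [exact: open_closedC|].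
  have uc : continuous u := @Urysohn_continuous _ _ _ _.
  have u01 y : 0 <= u y <= 1.
    have : (`[0, 1]%classic : set R) (u y) by apply: Urysohn_range; exists y.
    by rewrite /= in_itv.
  have ux : u x = 0 by apply: (Urysohn_sub0 sep); exists x.
  have u1 y : ~ U y -> u y = 1 by move=> Uy; apply: (Urysohn_sub1 sep); exists y.
  pose g y := 1 - u y.
  have gc : continuous g.
    move=> y; apply: cvgB; [exact: cvg_cst | exact: uc].
  have gG : goodf U g.
    split => //; split.
      by move=> y; rewrite /g subr_ge0 lerBlDr lerDl; case/andP: (u01 y) => -> ->.
    by move=> y /u1; rewrite /g => ->; rewrite subrr.
  pose W := g @^-1` `]2^-1, +oo[.
  have oW : open W by move/continuousP: gc; apply; exact: rray_open.
  exists W; last by rewrite /W /= in_itv /= andbT /g ux subr0 invf_lt1 // ltr1n.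
  split => //; split; last by exists g; split => // y; rewrite /W /= in_itv /= andbT => /ltW.
  apply/eqP; rewrite eq_le measure_ge0 andbT leNgt; apply/negP => Wpos.
  apply: nex; exists g; split => //.
  case: gG => _ [g01 _].
  apply: (pint_gt0 gc g01 oW) => // y; rewrite /W /= in_itv /= andbT => /ltW.
  by [].
have : (mu U <= mu (\bigcup_(W in F) W))%E.
  apply: le_measure => //; rewrite inE; apply: open_mble => //.
  by apply: bigcup_open => W /hF[].
by rewrite F0 leNgt muU.
Qed.
End Exg.
Section Mix.
Context (R : realType) (X : pseudoPMetricType R) (mu nu : prob X).
Definition half : {nonneg R} := (2^-1)%:nng.
Local Open Scope ereal_scope.
Definition mix := mscale half (measure_add mu nu).
HB.instance Definition _ := Measure.on mix.

Lemma mixE A : mix A = (2^-1)%:E * (mu A + nu A).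
Proof. rewrite /mix /mscale /=; congr (_ * _); exact: measure_addE. Qed.

Let mix1 : mix setT = 1.
Proof.
have P1 : mu [set: borel X] = 1 := probability_setT mu.
have P2 : nu [set: borel X] = 1 := probability_setT nu.
rewrite mixE P1 P2 -EFinD -EFinM; congr EFin.
by rewrite mulVf.
Qed.

HB.instance Definition _ := Measure_isProbability.Build _ _ _ mix mix1.

Definition mixp : prob X := mix.
End Mix.
Section MixLemmas.
Context (R : realType) (X : pseudoPMetricType R) (T : X -> X).
Local Open Scope ereal_scope.

Lemma mix_inv (mu nu : prob X) : T_invariant T mu -> T_invariant T nu ->
  T_invariant T (mixp mu nu).
Proof.
move=> hm hn A mA; rewrite /mixp /= !mixE hm // hn //.
Qed.

Lemma mix_posl (mu nu : prob X) (A : set X) : 0 < mu A -> 0 < mixp mu nu A.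
Proof.
move=> h; rewrite /mixp /= mixE mule_gt0 // ?lte_fin ?invr_gt0 ?ltr0n //.
exact: lt_le_trans h (leeDl _ (measure_ge0 _ _)).
Qed.

Lemma mix_posr (mu nu : prob X) (A : set X) : 0 < nu A -> 0 < mixp mu nu A.
Proof.
move=> h; rewrite /mixp /= mixE mule_gt0 // ?lte_fin ?invr_gt0 ?ltr0n //.
exact: lt_le_trans h (leeDr _ (measure_ge0 _ _)).
Qed.
End MixLemmas.
Section Dyn.
Context (R : realType) (X : pseudoPMetricType R) (T : X -> X).
Hypothesis Tc : continuous T.
Local Open Scope ereal_scope.

Lemma open_preT (W : set X) : open W -> open (T @^-1` W).
Proof. by move/continuousP: Tc; apply. Qed.

Lemma iter_cont n : continuous (iter n T).
Proof.
elim: n => [|n IH] /=; first by move=> x.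
by move=> x; apply: continuous_comp; [exact: IH|exact: Tc].
Qed.

Lemma open_preiter n (W : set X) : open W -> open (iter n T @^-1` W).
Proof. by move/continuousP: (iter_cont (n:=n)); apply. Qed.

Lemma center_fwd x : measure_center T x -> measure_center T (T x).
Proof.
move=> Cx [W [oW Wnull] WTx]; apply: Cx; exists (T @^-1` W) => //.
split; first exact: open_preT.
by move=> mu hmu; rewrite hmu ?Wnull //; exact: open_mble.
Qed.

Lemma center_iter n x : measure_center T x -> measure_center T (iter n T x).
Proof. by elim: n => [//|n IH] /= /IH; exact: center_fwd. Qed.

Lemma center_pos (U : set X) : open U -> (measure_center T `&` U) !=set0 ->
  exists mu : prob X, T_invariant T mu /\ 0 < mu U.
Proof.
move=> oU [x [Cx Ux]].
case: (pselect (exists mu : prob X, T_invariant T mu /\ 0 < mu U)) => // nex.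
exfalso; apply: Cx; exists U => //; split => // mu hmu.
apply/eqP; rewrite eq_le measure_ge0 andbT leNgt; apply/negP => h.
by apply: nex; exists mu.
Qed.

Lemma pos_center (sepX : separable_space X) (rho : prob X) (O : set X) :
  T_invariant T rho -> open O -> 0 < rho O ->
  exists x, measure_center T x /\ O x.
Proof.
move=> hr oO rO.
case: (pselect (exists x, measure_center T x /\ O x)) => // nex; exfalso.
pose F := [set U : set X | open U /\
         forall mu : prob X, T_invariant T mu -> mu U = 0%E].
have hF W : F W -> open W /\ rho W = 0 by case=> oW /(_ rho hr).
have F0 := null_union sepX hF.
have sub : O `<=` \bigcup_(W in F) W.
  move=> x Ox; apply: contrapT => nx; apply: nex; exists x; split => //.
have : rho O <= rho (\bigcup_(W in F) W).
  apply: le_measure => //; rewrite inE; apply: open_mble => //.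
  by apply: bigcup_open => W /hF[].
by rewrite F0 leNgt rO.
Qed.

End Dyn.
Section Erg.
Context (R : realType) (X : pseudoPMetricType R) (T : X -> X).
Hypothesis Tc : continuous T.
Local Open Scope ereal_scope.

Lemma erg_visit (rho : prob X) (U V : set X) : T_ergodic T rho ->
  open U -> open V -> 0 < rho U -> 0 < rho V ->
  exists n, 0 < rho (U `&` iter n.+1 T @^-1` V).
Proof.
move=> [hinv herg] oU oV rU rV.
pose P0 := \bigcup_n (iter n.+1 T @^-1` V).
have oP0 : open P0 by apply: bigcup_open => n _; exact: open_preiter.
pose Q k := iter k T @^-1` P0.
have oQ k : open (Q k) by exact: open_preiter.
have mQ k : measurable (Q k : set (borel X)) by exact: open_mble.
have rQ k : rho (Q k) = rho P0.
  elim: k => [//|k IH]; rewrite -IH.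
  have -> : Q k.+1 = T @^-1` Q k.
    by apply/funext => x; rewrite /Q /preimage /= -iterSr.
  by rewrite hinv.
have QS k : Q k.+1 `<=` Q k.
  move=> x [n _ hn]; exists n.+1 => //.
  change (V (iter n.+2 T (iter k T x))); rewrite iterSr; exact: hn.
pose B := \bigcap_k Q k.
have mB : measurable (B : set (borel X)) by exact: bigcapT_measurable.
have TB : T @^-1` B = B.
  apply/seteqP; split => x /= h.
    move=> k _; apply: QS; change (P0 (iter k.+1 T x)); rewrite iterSr.
    exact: (h k I).
  move=> k _; change (P0 (iter k T (T x))); rewrite -iterSr; exact: (h k.+1 I).
have rB : rho B = rho P0.
  have Q0 : rho (Q 0%N) < +oo.
    by rewrite (le_lt_trans (probability_le1 rho (mQ 0%N))) // ltey.
  have ni : nonincreasing_seq Q by apply/nonincreasing_seqP => n; apply/subsetPset; exact: QS.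
  have hc := nonincreasing_cvg_mu Q0 mQ mB ni.
  have e : rho \o Q = cst (rho P0) by apply/funext => k; rewrite /= rQ.
  rewrite e in hc.
  have := cvg_lim (@ereal_hausdorff R) hc; rewrite lim_cst.
  - by move=> ->.
  - exact: ereal_hausdorff.
have mU := open_mble oU.
have mV := open_mble oV.
have mO n : measurable (U `&` iter n.+1 T @^-1` V : set (borel X)).
  by apply: open_mble; apply: openI => //; exact: open_preiter.
have rP0 : 0 < rho P0.
  apply: (lt_le_trans rV); rewrite -hinv //; apply: le_measure.
  - by rewrite inE; apply: open_mble; exact: open_preT.
  - by rewrite inE; exact: open_mble.
  by move=> x Vx; exists 0%N.
have rB1 : rho B = 1.
  case: (herg B mB TB) => [h0|//]; move: rP0; by rewrite -rB h0 ltxx.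
have rCB : rho (~` B) = 0.
  have := probability_setC rho mB => ->; by rewrite rB1 subee.
have rUB : 0 < rho (U `&` B).
  apply: (lt_le_trans rU).
  have mUB : measurable (U `&` B : set (borel X)) by exact: measurableI.
  have mCB : measurable (~` B : set (borel X)) by exact: measurableC.
  have h1 : rho U <= rho ((U `&` B) `|` ~` B).
    apply: le_measure.
    - by rewrite inE.
    - by rewrite inE; exact: measurableU.
    - by move=> x Ux; case: (pselect (B x)) => Bx; [left|right].
  apply: (le_trans h1).
  apply: (le_trans (measureU2 _ mUB mCB)).
  by rewrite [X in _ + X](_ : _ = 0) ?adde0 //; exact: rCB.
case: (pselect (exists n, 0 < rho (U `&` iter n.+1 T @^-1` V))) => // nex.
exfalso; move: rUB; apply/negP; rewrite -leNgt.
have cov : U `&` B `<=` \bigcup_n (U `&` iter n.+1 T @^-1` V).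
  move=> x [Ux Bx]; have [n _ hn] := Bx 0%N I; exists n => //.
have := measure_sigma_subadditive rho mO (measurableI _ _ mU mB) cov.
move/le_trans; apply; rewrite eseries0 // => n _ _.
apply/eqP; rewrite eq_le measure_ge0 andbT leNgt; apply/negP => h.
by apply: nex; exists n.
Qed.
End Erg.
Theorem proposition7p2 (R : realType) (X : completePseudoMetricType R)
  (T : X -> X)
  (hX : hausdorff_space X) (sepX : separable_space X)
  (Tcont : continuous T) (Tsurj : forall y : X, exists x, T x = y)
  (hM : exists mu : prob X, T_invariant T mu)
  (hdense : weak_star_dense_in (T_ergodic T) (T_invariant T)) :
  transitive_on (measure_center T) T.
Proof.
move=> U V oU oV CU CV.
have [mu1 [inv1 pos1]] := center_pos oU CU.
have [mu2 [inv2 pos2]] := center_pos oV CV.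
pose m := mixp mu1 mu2.
have invm : T_invariant T m := mix_inv inv1 inv2.
have mU : (0 < m U)%E := mix_posl _ pos1.
have mV : (0 < m V)%E := mix_posr _ pos2.
have [gU [[gUc [gU01 gU0]] pU]] := exists_g sepX oU mU.
have [gV [[gVc [gV01 gV0]] pV]] := exists_g sepX oV mV.
pose f (i : 'I_2) := if i == ord0 then gU else gV.
have bc (g : X -> R) : continuous g -> (forall x, 0 <= g x <= 1) -> bcont g.
  move=> gc g01; split => //; exists 1 => x.
  by case/andP: (g01 x) => g0 g1; rewrite ger0_norm.
have hf i : bcont (f i) by rewrite /f; case: ifP => _; exact: bc.
pose eps := Num.min (pint m gU) (pint m gV).
have eps0 : 0 < eps by rewrite lt_min pU pV.
have [rho [erg hrho]] := hdense m invm 2 f hf eps eps0.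
have pos (g : X -> R) (i : 'I_2) : f i = g -> eps <= pint m g -> 0 < pint rho g.
  move=> fi le; have := hrho i; rewrite fi ltr_distl => /andP[h _].
  by apply: le_lt_trans h; rewrite subr_ge0.
have rU : (0 < rho U)%E.
  apply: (pint_pos gUc gU01 oU gU0); apply: (pos gU ord0) => //.
  by rewrite ge_min lexx.
have rV : (0 < rho V)%E.
  apply: (pint_pos gVc gV01 oV gV0); apply: (pos gV (@Ordinal 2 1 isT)) => //.
  by rewrite ge_min lexx orbT.
have [n rn] := erg_visit Tcont erg oU oV rU rV.
have oO : open (U `&` iter n.+1 T @^-1` V).
  by apply: openI => //; exact: open_preiter.
have [x [Cx [Ux Vx]]] := pos_center sepX erg.1 oO rn.
exists n.+1; split => //; exists x; split => //; split => //.
exact: center_iter.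
Qed.
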